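(* Let $c\ge1$ and let $\Gamma=(V,E)$ be a $c$-uniform unoriented hypergraph with $N=|V|$ vertices, $M=|E|\ge1$ edges and no isolated vertices; let $\overline{\deg}$ be its average degree (so $c/\overline{\deg}=N/M$) and $\mu_1$ the smallest eigenvalue of its edge Laplacian $L^1$. Then $\mu_1\le c/\overline{\deg}$, and \[ \chi'(\Gamma)\;\ge\;\frac{c-\mu_1}{c/\overline{\deg}-\mu_1}, \] where, if $\mu_1=c/\overline{\deg}$, the right-hand side is interpreted as $1$. Moreover, the inequality is sharp: for integers $p\ge2$ and $1\le k\le c-1$, the $c$-uniform hyperflower with $p$ petals and $k$ central vertices attains equality.
   Context: A hypergraph has finite vertex set $V$ and edge set $E\subseteq\mathcal P(V)$; it is $c$-uniform if $|e|=c$ for all $e$, and unoriented means all incidences have orientation $+1$, so the incidence matrix $\mathcal I$ is the $N\times M$ matrix with $\mathcal I_{v,e}=1$ if $v\in e$ and $0$ otherwise. $\deg v=|\{e: v\in e\}|\ge1$, $D=\mathrm{diag}(\deg v)$, $\overline{\deg}=\frac1N\sum_v\deg v$. The edge Laplacian is the $M\times M$ matrix $L^1=\mathcal I^\top D^{-1}\mathcal I$, with eigenvalues $0\le\mu_1\le\dots\le\mu_M$. A proper strong $k$-edge-coloring is a map $c'\colon E\to\{1,\dots,k\}$ such that $c'(e_1)=c'(e_2)$ with $e_1\ne e_2$ implies $e_1\cap e_2=\varnothing$; $\chi'(\Gamma)$ is the least such $k$. The $c$-uniform hyperflower with $p$ petals and $k$ central vertices is the hypergraph with a set $h$ of $k$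 central vertices and $p$ edges of size $c$, each consisting of $h$ together with $c-k$ further vertices, where distinct edges intersect exactly in $h$. *)

(* Defs.v *)
From HB Require Import structures.
From mathcomp Require Import all_boot all_order all_algebra.
From mathcomp Require Export reals.
Set Implicit Arguments. Unset Strict Implicit. Unset Printing Implicit Defensive.
Import Order.TTheory GRing.Theory Num.Theory.
Local Open Scope ring_scope.

Definition deg (V : finType) (E : {set {set V}}) (v : V) : nat :=
  #|[set e in E | v \in e]|.

Definition avg_deg (R : numFieldType) (V : finType) (E : {set {set V}}) : R :=
  (\sum_(v : V) (deg E v)%:R) / (#|V|)%:R.

Definition c_uniform (V : finType) (E : {set {set V}}) (c : nat) : Prop :=
  forall e, e \in E -> #|e| = c.

Definition no_isolated (V : finType) (E : {set {set V}}) : Prop :=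
  forall v : V, (1 <= deg E v)%N.

Definition edge_of (V : finType) (E : {set {set V}}) (j : 'I_#|E|) : {set V} :=
  enum_val j.

Definition vert_of (V : finType) (i : 'I_#|V|) : V := enum_val i.

Definition incidence (R : numFieldType) (V : finType) (E : {set {set V}})
  : 'M[R]_(#|V|, #|E|) :=
  \matrix_(i, j) (if vert_of i \in edge_of j then 1 else 0).

Definition degmx (R : numFieldType) (V : finType) (E : {set {set V}})
  : 'M[R]_(#|V|) :=
  diag_mx (\row_i (deg E (vert_of i))%:R).

Definition edge_laplacian (R : numFieldType) (V : finType) (E : {set {set V}})
  : 'M[R]_(#|E|) :=
  (incidence R E)^T *m invmx (degmx R E) *m incidence R E.

Definition strong_colorable (V : finType) (E : {set {set V}}) (k : nat) : bool :=
  [exists col : {ffun {set V} -> 'I_k},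
     [forall e1 in E, forall e2 in E,
        ((e1 != e2) && (col e1 == col e2)) ==> [disjoint e1 & e2]]].

Lemma strong_colorable_exists (V : finType) (E : {set {set V}}) :
  exists k, strong_colorable E k.
Proof.
exists #|{set V}|; apply/existsP; exists [ffun e => enum_rank e].
apply/forallP=> e1; apply/implyP=> _; apply/forallP=> e2; apply/implyP=> _.
apply/implyP=> /andP[ne]; rewrite !ffunE => /eqP/enum_rank_inj eq12.
by rewrite eq12 eqxx in ne.
Qed.

Definition chi_edge (V : finType) (E : {set {set V}}) : nat :=
  ex_minn (strong_colorable_exists E).

(* E is the c-uniform hyperflower with p petals and k central vertices
   (vertex set V = h together with the petal vertices) *)
Definition is_hyperflower (V : finType) (E : {set {set V}}) (c p k : nat) : Prop :=
  exists h : {set V},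
    [/\ #|h| = k, #|E| = p,
        (forall e, e \in E -> #|e| = c /\ h \subset e),
        (forall e1 e2, e1 \in E -> e2 \in E -> e1 != e2 -> e1 :&: e2 = h) &
        (forall v : V, exists2 e, e \in E & v \in e)].

(* Main.v *)
Require Import Defs.
From HB Require Import structures.
From mathcomp Require Import all_boot all_order all_algebra.
From mathcomp Require Import reals.
From mathcomp Require Import complex.
From mathcomp Require Import ring lra zify.
Import Order.TTheory GRing.Theory Num.Theory.
Local Open Scope ring_scope.
Section Ray.
Local Open Scope sesquilinear_scope.
Lemma rayleigh (R : rcfType) n (A : 'M[R]_n) (mu : R) :
  A^T = A -> (forall a, eigenvalue A a -> mu <= a) ->
  forall x : 'rV[R]_n, mu * (x *m x^T) 0 0 <= (x *m A *m x^T) 0 0.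
Proof.
move=> sA minmu x.
pose f := real_complex R.
have fconj : forall r : R, (f r)^* = f r.
  by move=> r; apply/CrealP/complex_realP; exists r.
pose Ac := map_mx f A.
have Aherm : Ac ^t* = Ac.
  apply/matrixP => i j; rewrite !mxE fconj.
  by rewrite -[in RHS]sA mxE.
have Ah : Ac \is hermsymmx.
  by apply/is_hermitianmxP; rewrite expr0 scale1r Aherm.
have /orthomx_spectralP Adec := hermitian_normalmx Ah.
have dreal := hermitian_spectral_diag_real Ah.
set P := spectralmx Ac in Adec.
set d := spectral_diag Ac in Adec dreal.
have Pu : P \is unitarymx by exact: spectral_unitarymx.
have PPt := unitarymxP Pu.
have Punit : P \in unitmx by exact: unitarymx_unit.
have PtP : P ^t* *m P = 1%:M by rewrite -invmx_unitary // mulVmx.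
rewrite invmx_unitary // in Adec.
have dge : forall i, f mu <= d 0 i.
  move=> i.
  have dri : d 0 i \is Num.real by apply: (mxOverP dreal).
  rewrite -(RRe_real dri) lecR; apply: minmu.
  suff : root (char_poly Ac) (d 0 i).
    by rewrite -(RRe_real dri) -map_char_poly fmorph_root eigenvalue_root_char.
  rewrite -eigenvalue_root_char; apply/eigenvalueP.
  exists (row i P).
    have : P *m Ac = diag_mx d *m P.
      by rewrite Adec !mulmxA PPt mul1mx.
    move=> /(congr1 (row i)); rewrite -!row_mul => ->.
    by apply/rowP => j; rewrite mul_diag_mx !mxE.
  apply/eqP => ri0.
  have := congr1 (row i) PPt; rewrite row_mul ri0 mul0mx => /rowP/(_ i).
  by rewrite !mxE eqxx /= => /eqP; rewrite eq_sym oner_eq0.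
pose xc := map_mx f x.
have xct : xc ^t* = map_mx f x^T.
  by apply/matrixP => i j; rewrite !mxE fconj.
have h1 : f ((x *m A *m x^T) 0 0) = (xc *m Ac *m xc^t*) 0 0.
  by rewrite xct /xc /Ac -!map_mxM [RHS]mxE.
have h2 : f ((x *m x^T) 0 0) = (xc *m xc^t*) 0 0.
  by rewrite xct /xc /Ac -!map_mxM [RHS]mxE.
pose y := xc *m P^t*.
have yt : y ^t* = P *m xc ^t*.
  by rewrite /y trmx_mul map_mxM trmxCK.
have e1 : xc *m Ac *m xc^t* = y *m diag_mx d *m y^t*.
  by rewrite yt Adec /y !mulmxA.
have e2 : xc *m xc^t* = y *m y^t*.
  by rewrite yt /y !mulmxA -(mulmxA xc) PtP mulmx1.
rewrite -lecR rmorphM /= -/f h1 h2 e1 e2.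
have sumE : forall D : 'rV[R[i]]_n, (y *m diag_mx D *m y^t*) 0 0 = \sum_j D 0 j * (y 0 j * (y 0 j)^*).
  move=> D; rewrite mul_mx_diag !mxE; apply: eq_bigr => j _.
  by rewrite !mxE mulrCA mulrA [_ * D 0 j]mulrC.
have -> : y *m y^t* = y *m diag_mx (const_mx 1) *m y^t*.
  by rewrite diag_const_mx mulmx1.
rewrite !sumE mulr_sumr; apply: ler_sum => j _.
rewrite mxE mul1r; apply: ler_wpM2r; [exact: mul_conjC_ge0 | exact: dge].
Qed.

End Ray.

Section H.
Variables (R : realFieldType) (n : nat) (A : 'M[R]_n) (c : R).
Hypothesis rows : forall i, \sum_j A i j = c.
Hypothesis cols : forall j, \sum_i A i j = c.

Definition qf (x : 'I_n -> R) := \sum_i \sum_j x i * A i j * x j.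

Lemma qf_shift (u : 'I_n -> R) (t : R) :
  qf (fun i => u i - t) = qf u - 2 * t * c * (\sum_i u i) + t ^+ 2 * c * n%:R.
Proof.
rewrite /qf.
have e1 : forall i, \sum_j (u i - t) * A i j * (u j - t)
   = (\sum_j u i * A i j * u j) - t * (\sum_j A i j * u j) - u i * t * c + t ^+ 2 * c.
  move=> i.
  have -> : \sum_j (u i - t) * A i j * (u j - t) =
     \sum_j (u i * A i j * u j + (- t) * (A i j * u j) + (- (u i * t)) * A i j + t^+2 * A i j).
    by apply: eq_bigr => j _; ring.
  rewrite !big_split /= -!mulr_sumr rows; ring.
rewrite (eq_bigr _ (fun i _ => e1 i)) !big_split /= !sumrN -!mulr_sumr -!mulr_suml.
rewrite [\sum_(i < n) \sum_(j < n) A i j * u j]exchange_big /=.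
have -> : \sum_(j < n) \sum_(i < n) A i j * u j = c * \sum_j u j.
  rewrite mulr_sumr; apply: eq_bigr => j _; rewrite -mulr_suml cols; ring.
rewrite sumr_const card_ord -mulr_natr; ring.
Qed.
Lemma hoffman k (mu : R) (col : 'I_n -> 'I_k) : (0 < n)%N ->
  (forall i j, i != j -> col i = col j -> A i j = 0) ->
  (forall x, mu * \sum_i x i ^+ 2 <= qf x) ->
  [/\ mu <= c, mu * n%:R <= \tr A & (c - mu) * n%:R <= k%:R * (\tr A - mu * n%:R)].
Proof.
move=> n0 hcol ray.
have nR : 0 < n%:R :> R by rewrite ltr0n.
have nR0 : n%:R != 0 :> R by rewrite gt_eqF.
have q1 : qf (fun=> 1) = c * n%:R.
  rewrite /qf (eq_bigr (fun=> c)) ?sumr_const ?card_ord ?mulr_natr // => i _.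
  by rewrite -(rows i); apply: eq_bigr => j _; rewrite mul1r mulr1.
have muc : mu <= c.
  have := ray (fun=> 1); rewrite q1 (eq_bigr (fun=> 1)) ?expr1n //.
  by rewrite sumr_const card_ord mulr_natr -mulr_natr ler_pM2r.
pose s (a : 'I_k) i : R := (col i == a)%:R.
have s2 : forall a i, s a i * s a i = s a i.
  by move=> a i; rewrite /s; case: (col i == a); rewrite ?mulr1 ?mulr0.
pose m a := \sum_i s a i.
have qs : forall a, qf (s a) = \sum_i s a i * A i i.
  move=> a; rewrite /qf; apply: eq_bigr => i _; rewrite (bigD1 i) //= big1 ?addr0.
    by rewrite mulrAC s2.
  move=> j ji; rewrite /s; case: eqP => ea; last by rewrite mul0r mul0r.
  case: eqP => eb; last by rewrite mulr0.
  by rewrite hcol ?mulr0 ?mul0r // 1?eq_sym // ea eb.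
have qa : forall a, qf (fun i => s a i - m a / n%:R) =
    \sum_i s a i * A i i - c * m a ^+ 2 / n%:R.
  by move=> a; rewrite qf_shift qs -/(m a); field.
have na : forall a, \sum_i (s a i - m a / n%:R) ^+ 2 = m a - m a ^+ 2 / n%:R.
  move=> a.
  rewrite (eq_bigr (fun i => s a i + (- (2 * (m a / n%:R))) * s a i + (m a / n%:R) ^+ 2)); last first.
    by move=> i _; rewrite sqrrB expr2 s2; ring.
  by rewrite !big_split /= -mulr_sumr sumr_const card_ord -/(m a); field.
have sum1 : forall i, \sum_a s a i = 1.
  move=> i; rewrite (bigD1 (col i)) //= big1 ?addr0 /s ?eqxx //.
  by move=> b /negPf; rewrite eq_sym => ->.
have summ : \sum_a m a = n%:R.
  rewrite /m exchange_big /= (eq_bigr (fun=> 1)) ?sumr_const ?card_ord //.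
have sumD : \sum_a \sum_i s a i * A i i = \tr A.
  rewrite exchange_big /= /mxtrace; apply: eq_bigr => i _.
  by rewrite -mulr_suml sum1 mul1r.
pose S := \sum_a m a ^+ 2.
have key : mu * (n%:R - S / n%:R) <= \tr A - c * S / n%:R.
  have : \sum_a mu * (m a - m a ^+ 2 / n%:R) <= \sum_a (\sum_i s a i * A i i - c * m a ^+ 2 / n%:R).
    apply: ler_sum => b _; rewrite -na -qa; exact: ray.
  rewrite -mulr_sumr !big_split /= !sumrN sumD summ -!mulr_suml -mulr_sumr.
  by rewrite /S.
have S0 : 0 <= S by rewrite sumr_ge0 // => a _; rewrite sqr_ge0.
have k0 : (0 < k)%N by case: k col {hcol s s2 m qs qa na sum1 summ sumD S key S0} => // col; case: (col (Ordinal n0)).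
have kR : 0 < k%:R :> R by rewrite ltr0n.
have CS : n%:R ^+ 2 <= k%:R * S.
  have : 0 <= \sum_a (m a - n%:R / k%:R) ^+ 2 by rewrite sumr_ge0 // => a _; rewrite sqr_ge0.
  rewrite (eq_bigr (fun a => m a ^+ 2 + (- (2 * (n%:R / k%:R))) * m a + (n%:R / k%:R) ^+ 2)); last first.
    by move=> a _; ring.
  rewrite !big_split /= -mulr_sumr summ sumr_const card_ord -/S.
  have -> : S + - (2 * (n%:R / k%:R)) * n%:R + (n%:R / k%:R) ^+ 2 *+ k
    = (k%:R * S - n%:R ^+ 2) / k%:R.
    rewrite -mulr_natr; field; by rewrite gt_eqF.
  by rewrite pmulr_lge0 ?invr_gt0 // subr_ge0.
have T0 : 0 <= S / n%:R by rewrite divr_ge0 // ltW.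
have cm0 : 0 <= c - mu by rewrite subr_ge0.
have key' : (c - mu) * (S / n%:R) <= \tr A - mu * n%:R.
  by move: key; rewrite -!mulrA; lra.
have kT : n%:R <= k%:R * (S / n%:R).
  rewrite mulrA ler_pdivlMr // -expr2 //.
split => //.
  have : 0 <= (c - mu) * (S / n%:R) by rewrite mulr_ge0.
  by move: key'; lra.
apply: (le_trans (ler_wpM2l cm0 kT)).
rewrite mulrCA; apply: ler_wpM2l; [exact: ltW | exact: key'].
Qed.

End H.

Section HG.
Variables (R : realFieldType) (V : finType) (E : {set {set V}}).

Lemma sum_vert (F : V -> R) : \sum_(i < #|V|) F (vert_of i) = \sum_v F v.
Proof. by rewrite /vert_of -(big_enum_val (A := predT)); apply: eq_bigl. Qed.

Lemma sum_edge (F : {set V} -> R) : \sum_(j < #|E|) F (edge_of j) = \sum_(e in E) F e.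
Proof. by rewrite /edge_of -(big_enum_val (A := mem E)). Qed.

Lemma sum_bool (A : {pred {set V}}) (P : pred {set V}) :
  \sum_(e in A) (P e)%:R = #|[set e in A | P e]|%:R :> R.
Proof.
rewrite -sum1_card natr_sum big_mkcond /= [RHS]big_mkcond /=; apply: eq_bigr => e _.
by rewrite !inE; case: (e \in A); case: (P e).
Qed.

Lemma sum_boolV (P : pred V) :
  \sum_v (P v)%:R = #|[set v | P v]|%:R :> R.
Proof.
rewrite -sum1_card natr_sum [RHS]big_mkcond /=; apply: eq_bigr => v _.
by rewrite !inE; case: (P v).
Qed.

Lemma deg_sum v : (deg E v)%:R = \sum_(e in E) (v \in e)%:R :> R.
Proof. by rewrite sum_bool. Qed.

Hypothesis noiso : no_isolated E.

Lemma deg_neq0 v : (deg E v)%:R != 0 :> R.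
Proof. by rewrite pnatr_eq0 -lt0n; exact: noiso. Qed.

Lemma invmx_deg : invmx (degmx R E) = diag_mx (\row_i ((deg E (vert_of i))%:R)^-1).
Proof.
set D := degmx R E; set D' := diag_mx _.
have DD : D *m D' = 1%:M.
  apply/matrixP => i j; rewrite /D /degmx mul_diag_mx !mxE.
  case: (eqVneq i j) => [->|nij]; rewrite ?eqxx ?(negPf nij) /= ?mulr1n ?mulr0n ?mulr0 //.
  by rewrite mulfV ?deg_neq0.
have [Du _] := mulmx1_unit DD.
by rewrite -[invmx D]mulmx1 -DD mulmxA mulVmx // mul1mx.
Qed.

Definition inc_b (v : V) (e : {set V}) : R := (v \in e)%:R.

Lemma lap_entry j j' : edge_laplacian R E j j' =
  \sum_v (v \in edge_of j)%:R * (v \in edge_of j')%:R / (deg E v)%:R.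
Proof.
rewrite /edge_laplacian invmx_deg mul_mx_diag !mxE -sum_vert; apply: eq_bigr => i _.
rewrite !mxE; case: (_ \in _); case: (_ \in _); rewrite /= ?mul0r ?mul1r ?mulr1 ?mulr0 ?mul0r //.
Qed.

Lemma lap_sym : (edge_laplacian R E)^T = edge_laplacian R E.
Proof.
apply/matrixP => j j'; rewrite mxE !lap_entry; apply: eq_bigr => v _.
by rewrite [_ * (_ \in edge_of j')%:R]mulrC.
Qed.

Lemma sum_inc v : \sum_(j < #|E|) (v \in edge_of j)%:R = (deg E v)%:R :> R.
Proof. by rewrite (sum_edge (fun e => (v \in e)%:R)) deg_sum. Qed.

Lemma lap_row c : c_uniform E c -> forall j,
  \sum_j' edge_laplacian R E j j' = c%:R.
Proof.
move=> cu j.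
rewrite (eq_bigr _ (fun j' _ => lap_entry j j')) exchange_big /=.
rewrite (eq_bigr (fun v => (v \in edge_of j)%:R)); last first.
  move=> v _; rewrite (eq_bigr (fun j' => (v \in edge_of j)%:R / (deg E v)%:R * (v \in edge_of j')%:R)); last first.
    by move=> j' _; rewrite mulrAC.
  by rewrite -mulr_sumr sum_inc mulfVK ?deg_neq0.
by rewrite sum_boolV -(cu _ (enum_valP j)); congr (_%:R); apply: eq_card => v; rewrite inE.
Qed.

Lemma lap_col c : c_uniform E c -> forall j',
  \sum_j edge_laplacian R E j j' = c%:R.
Proof.
move=> cu j'; rewrite -(lap_row c cu j'); apply: eq_bigr => j _.
by rewrite -[in LHS]lap_sym mxE.
Qed.

Lemma lap_tr : \tr (edge_laplacian R E) = #|V|%:R.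
Proof.
rewrite /mxtrace (eq_bigr _ (fun j _ => lap_entry j j)) exchange_big /=.
rewrite (eq_bigr (fun v => 1)); last first.
  move=> v _; rewrite (eq_bigr (fun j => (v \in edge_of j)%:R / (deg E v)%:R)); last first.
    by move=> j _; case: (_ \in _); rewrite ?mul1r ?mul0r.
  by rewrite -mulr_suml sum_inc mulfV ?deg_neq0.
by rewrite sumr_const.
Qed.

Lemma lap_disj j j' : [disjoint edge_of j & edge_of j'] -> edge_laplacian R E j j' = 0.
Proof.
move=> dis; rewrite lap_entry big1 // => v _.
case vj: (v \in edge_of j); last by rewrite !mul0r.
by rewrite (disjointFr dis vj) mulr0 mul0r.
Qed.

Lemma sum_deg c : c_uniform E c -> \sum_v (deg E v)%:R = (c * #|E|)%:R :> R.
Proof.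
move=> cu; rewrite (eq_bigr _ (fun v _ => deg_sum v)) exchange_big /=.
rewrite (eq_bigr (fun=> c%:R)); last first.
  by move=> e eE; rewrite sum_boolV -(cu _ eE); congr (_%:R); apply: eq_card => v; rewrite inE.
by rewrite sumr_const natrM mulr_natr.
Qed.
End HG.


Lemma rayleigh_sum (R : rcfType) n (A : 'M[R]_n) (mu : R) :
  A^T = A -> (forall a, eigenvalue A a -> mu <= a) ->
  forall x : 'I_n -> R, mu * \sum_i x i ^+ 2 <= qf _ _ A x.
Proof.
move=> sA hmin x.
have := rayleigh _ _ _ _ sA hmin (\row_i x i).
have -> : ((\row_i x i) *m (\row_i x i)^T) 0 0 = \sum_i x i ^+ 2.
  by rewrite mxE; apply: eq_bigr => i _; rewrite !mxE expr2.
have -> : ((\row_i x i) *m A *m (\row_i x i)^T) 0 0 = qf _ _ A x => //.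
rewrite mxE /qf exchange_big /=; apply: eq_bigr => j _.
rewrite !mxE mulr_suml; apply: eq_bigr => i _; by rewrite !mxE.
Qed.

Lemma part1 (R : realType) (V : finType) (E : {set {set V}}) (c : nat) (mu1 : R) :
     (1 <= c)%N -> c_uniform E c -> (1 <= #|E|)%N -> no_isolated E ->
     eigenvalue (edge_laplacian R E) mu1 ->
     (forall a : R, eigenvalue (edge_laplacian R E) a -> mu1 <= a) ->
     mu1 <= c%:R / avg_deg R E /\
     (if mu1 == c%:R / avg_deg R E then (1 <= chi_edge E)%N
      else (c%:R - mu1) / (c%:R / avg_deg R E - mu1) <= (chi_edge E)%:R).
Proof.
move=> c1 cu M0 noiso _ hmin.
have [e0 e0E] : exists e, e \in E by apply/card_gt0P.
have N0 : (0 < #|V|)%N.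
  have : (0 < #|e0|)%N by rewrite (cu _ e0E).
  by move=> /card_gt0P [v _]; apply/card_gt0P; exists v.
have MR : 0 < #|E|%:R :> R by rewrite ltr0n.
have NR : 0 < #|V|%:R :> R by rewrite ltr0n.
have cR : 0 < c%:R :> R by rewrite ltr0n.
have avg : c%:R / avg_deg R E = #|V|%:R / #|E|%:R.
  rewrite /avg_deg (sum_deg R V E c cu) natrM; field.
  by rewrite !gt_eqF.
rewrite avg.
rewrite /chi_edge; case: ex_minnP => k colk _.
move/existsP: colk => [col /forallP Hc].
pose colj (j : 'I_#|E|) := col (edge_of j).
have hcol : forall j j' : 'I_#|E|, j != j' -> colj j = colj j' ->
    edge_laplacian R E j j' = 0.
  move=> j j' njj' cjj; apply: (lap_disj R V E noiso).
  move: (Hc (edge_of j)) => /implyP/(_ (enum_valP j))/forallP/(_ (edge_of j')).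
  move=> /implyP/(_ (enum_valP j')) H; apply: (implyP H); rewrite /colj in cjj.
  rewrite cjj eqxx andbT.
  by apply: contra njj' => /eqP/enum_val_inj ->.
have [muc mun main] := hoffman _ _ _ _ (lap_row R V E noiso c cu) (lap_col R V E noiso c cu) _ _ _ M0 hcol
   (rayleigh_sum _ _ _ _ (lap_sym R V E noiso) hmin).
rewrite (lap_tr R V E noiso) in mun main.
have le1 : mu1 <= #|V|%:R / #|E|%:R by rewrite ler_pdivlMr.
split => //.
case: eqP => [_|ne].
  exact: (leq_ltn_trans (leq0n _) (ltn_ord (colj (Ordinal M0)))).
have gt : 0 < #|V|%:R / #|E|%:R - mu1.
  by rewrite subr_gt0 lt_neqAle le1 andbT; apply/eqP => h; apply: ne.
rewrite ler_pdivrMr //.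
have -> : k%:R * (#|V|%:R / #|E|%:R - mu1) = k%:R * (#|V|%:R - mu1 * #|E|%:R) / #|E|%:R.
  by field; rewrite gt_eqF.
by rewrite ler_pdivlMr.
Qed.

Lemma flower_lap (R : realFieldType) (V : finType) (E : {set {set V}}) (c p k : nat) (h : {set V}) :
  #|h| = k -> #|E| = p -> (forall e, e \in E -> #|e| = c /\ h \subset e) ->
  (forall e1 e2, e1 \in E -> e2 \in E -> e1 != e2 -> e1 :&: e2 = h) ->
  no_isolated E ->
  forall j j', edge_laplacian R E j j' = k%:R / p%:R + (j == j')%:R * (c%:R - k%:R).
Proof.
move=> hk Ep Hc Hi noiso j j'.
have degh : forall v, v \in h -> deg E v = p.
  move=> v vh; rewrite /deg -Ep; apply: eq_card => e; rewrite inE.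
  case eE: (e \in E) => //=; have [_ /subsetP] := Hc _ eE; exact.
have deg1 : forall e v, e \in E -> v \in e -> v \notin h -> deg E v = 1%N.
  move=> e v eE ve vh; rewrite /deg (_ : [set e0 in E | v \in e0] = [set e]) ?cards1 //.
  apply/setP => e'; rewrite !inE; apply/idP/eqP => [/andP[e'E ve']|->]; last by rewrite eE ve.
  by apply/eqP; apply: contraR vh => ne; rewrite -(Hi _ _ e'E eE ne) inE ve' ve.
have pR : p%:R != 0 :> R.
  by rewrite -Ep pnatr_eq0 -lt0n; apply/card_gt0P; exists (edge_of j); apply: enum_valP.
have hsum : \sum_v (v \in h)%:R / p%:R = k%:R / p%:R :> R.
  by rewrite -mulr_suml sum_boolV; congr (_%:R / _); rewrite -hk; apply: eq_card => w; rewrite inE.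
rewrite (lap_entry _ _ _ noiso).
have [ejE [ejc hej]] : edge_of j \in E /\ (#|edge_of j| = c /\ h \subset edge_of j).
  by split; [apply: enum_valP | apply: Hc; apply: enum_valP].
case: (eqVneq j j') => [<-|njj].

  rewrite (eq_bigr (fun v => (v \in h)%:R / p%:R + (v \in edge_of j :\: h)%:R)); last first.
    move=> v _; rewrite inE; case vh: (v \in h); case ve: (v \in edge_of j);
      rewrite /= ?mulr1n ?mulr0n ?mul1r ?mul0r ?addr0 ?add0r.
    - by rewrite degh.
    - by rewrite (subsetP hej v vh) in ve.
    - by rewrite (deg1 _ _ ejE ve) ?vh // mulr1n invr1.
    - by [].
  rewrite big_split /= hsum sum_boolV; congr (_ + _).
  have -> : [set v | v \in edge_of j :\: h] = edge_of j :\: h by apply/setP => v; rewrite inE.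
  rewrite cardsD (setIidPr hej) ejc hk natrB ?mul1r //.
  by rewrite -ejc -hk; apply: subset_leq_card.
rewrite [X in X * (_ - _)](_ : _ = 0) // mul0r addr0 -hsum; apply: eq_bigr => v _.
have ne : edge_of j != edge_of j' by apply: contra njj => /eqP/enum_val_inj ->.
have hv : (v \in h) = (v \in edge_of j) && (v \in edge_of j').
  by rewrite -(Hi _ _ ejE (enum_valP j') ne) inE.
rewrite hv; case ej: (v \in edge_of j); case ej': (v \in edge_of j');
  rewrite /= ?mulr1n ?mulr0n ?mul1r ?mul0r //.
by rewrite degh // hv ej ej'.
Qed.

Lemma chi_flower (V : finType) (E : {set {set V}}) (c p k : nat) (h : {set V}) :
  (1 <= k)%N -> #|h| = k -> #|E| = p -> (1 <= p)%N ->
  (forall e, e \in E -> #|e| = c /\ h \subset e) ->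
  chi_edge E = p.
Proof.
move=> k1 hk Ep p1 Hc.
have [e0 e0E] : exists e, e \in E by apply/card_gt0P; rewrite Ep.
have [x xh] : exists x, x \in h by apply/card_gt0P; rewrite hk.
rewrite /chi_edge; case: ex_minnP => m colm minm.
apply/eqP; rewrite eqn_leq; apply/andP; split.
  apply: minm; apply/existsP; exists [ffun e => cast_ord Ep (enum_rank_in e0E e)].
  apply/forallP => e1; apply/implyP => e1E; apply/forallP => e2; apply/implyP => e2E.
  apply/implyP => /andP[ne]; rewrite !ffunE => /eqP/cast_ord_inj/(enum_rank_in_inj e1E e2E) eq12.
  by rewrite eq12 eqxx in ne.
move/existsP: colm => [col /forallP Hcol].
have inj : {in E &, injective col}.
  move=> e1 e2 e1E e2E ce; apply/eqP; apply/negPn/negP => ne.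
  move: (Hcol e1) => /implyP/(_ e1E)/forallP/(_ e2)/implyP/(_ e2E)/implyP.
  rewrite ne ce eqxx => /(_ isT) dis.
  have [_ /subsetP s1] := Hc _ e1E; have [_ /subsetP s2] := Hc _ e2E.
  by move: (disjointFr dis (s1 _ xh)); rewrite s2.
rewrite -Ep -(card_in_imset inj).
by apply: leq_trans (max_card _) _; rewrite card_ord.
Qed.

Lemma avg_eq (R : realFieldType) (V : finType) (E : {set {set V}}) (c : nat) :
  (1 <= c)%N -> c_uniform E c -> (1 <= #|E|)%N ->
  c%:R / avg_deg R E = #|V|%:R / #|E|%:R.
Proof.
move=> c1 cu M0.
have [e0 e0E] : exists e, e \in E by apply/card_gt0P.
have N0 : (0 < #|V|)%N.
  have : (0 < #|e0|)%N by rewrite (cu _ e0E).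
  by move=> /card_gt0P [v _]; apply/card_gt0P; exists v.
have MR : 0 < #|E|%:R :> R by rewrite ltr0n.
have NR : 0 < #|V|%:R :> R by rewrite ltr0n.
have cR : 0 < c%:R :> R by rewrite ltr0n.
rewrite /avg_deg (sum_deg R V E c cu) natrM; field.
by rewrite !gt_eqF.
Qed.

Lemma part2 (R : realType) (V : finType) (E : {set {set V}}) (c p k : nat) (mu1 : R) :
     (2 <= p)%N -> (1 <= k)%N -> (k <= c - 1)%N ->
     is_hyperflower E c p k ->
     eigenvalue (edge_laplacian R E) mu1 ->
     (forall a : R, eigenvalue (edge_laplacian R E) a -> mu1 <= a) ->
     mu1 <= c%:R / avg_deg R E /\
     (if mu1 == c%:R / avg_deg R E then chi_edge E = 1%N
      else (chi_edge E)%:R = (c%:R - mu1) / (c%:R / avg_deg R E - mu1)).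
Proof.
move=> p2 k1 kc [h [hk Ep Hc Hi cover]] ev hmin.
have cu : c_uniform E c by move=> e eE; case: (Hc e eE).
have c1 : (1 <= c)%N by lia.
have M1 : (1 <= #|E|)%N by rewrite Ep; lia.
have noiso : no_isolated E.
  move=> v; have [e eE ve] := cover v; rewrite /deg; apply/card_gt0P; exists e.
  by rewrite inE eE ve.
have [le1 _] := part1 _ _ _ _ _ c1 cu M1 noiso ev hmin.
have Lf := flower_lap R V E c p k h hk Ep Hc Hi noiso.
set a := c%:R - k%:R in Lf; set b := k%:R / p%:R in Lf.
have Leq : edge_laplacian R E = \matrix_(i, j) (b + (i == j)%:R * a).
  by apply/matrixP => i j; rewrite [RHS]mxE Lf.
have pR : 0 < p%:R :> R by rewrite ltr0n; lia.
have kR : 0 < k%:R :> R by rewrite ltr0n.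
have b0 : 0 < b by rewrite divr_gt0.
have bp : b * p%:R = k%:R by rewrite /b mulfVK // gt_eqF.
have a_ev : eigenvalue (edge_laplacian R E) a.
  have h0 : (0 < #|E|)%N by rewrite Ep; lia.
  have h1 : (1 < #|E|)%N by rewrite Ep.
  pose i0 := Ordinal h0; pose i1 := Ordinal h1.
  rewrite Leq; apply/eigenvalueP; exists (\row_j ((j == i0)%:R - (j == i1)%:R)).
    apply/rowP => j; rewrite !mxE.
    rewrite (eq_bigr (fun i => b * ((i == i0)%:R - (i == i1)%:R) + ((i == i0)%:R - (i == i1)%:R) * (i == j)%:R * a)); last first.
      by move=> i _; rewrite !mxE; ring.
    have s1 : forall i0 : 'I_#|E|, \sum_i (i == i0)%:R = 1 :> R.
      by move=> i2; rewrite (bigD1 i2) //= eqxx big1 ?addr0 // => i /negPf ->.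
    have sj : forall (F : 'I_#|E| -> R) j, \sum_i F i * (i == j)%:R * a = F j * a.
      move=> F j'; rewrite (bigD1 j') //= eqxx mulr1 big1 ?addr0 // => i /negPf ->.
      by rewrite mulr0 mul0r.
    rewrite big_split /= -mulr_sumr sumrB !s1 subrr mulr0 add0r.
    by rewrite (sj (fun i => (i == i0)%:R - (i == i1)%:R)) mulrC.
  apply/eqP => /rowP/(_ i0); rewrite !mxE eqxx /=.
  by move=> /eqP; rewrite subr0 oner_eq0.
have mule : mu1 <= a := hmin a a_ev.
case/eigenvalueP: ev => w wL w0.
rewrite Leq in wL.
have sj : forall (F : 'I_#|E| -> R) j, \sum_i F i * (i == j)%:R * a = F j * a.
  move=> F j'; rewrite (bigD1 j') //= eqxx mulr1 big1 ?addr0 // => i /negPf ->.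
  by rewrite mulr0 mul0r.
pose S := \sum_i w 0 i.
have comp : forall j, b * S + w 0 j * a = mu1 * w 0 j.
  move=> j; move/rowP: wL => /(_ j); rewrite !mxE => <-.
  rewrite (eq_bigr (fun i => b * w 0 i + w 0 i * (i == j)%:R * a)); last first.
    by move=> i _; rewrite !mxE; ring.
  by rewrite big_split /= -mulr_sumr sj.
have S0 : S = 0.
  have : \sum_(j < #|E|) (b * S + w 0 j * a) = \sum_(j < #|E|) mu1 * w 0 j.
    by apply: eq_bigr => j _; apply: comp.
  rewrite big_split /= sumr_const card_ord -mulr_suml -mulr_sumr -/S Ep -mulr_natr => H.
  have e : S * (b * p%:R + a - mu1) = b * S * p%:R + S * a - mu1 * S by ring.
  rewrite H subrr bp in e.
  move/eqP: e; rewrite mulf_eq0 => /orP[/eqP //|/eqP e'].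
  exfalso; move: e' mule kR; clear; lra.
have aw : forall j, (a - mu1) * w 0 j = 0.
  move=> j; have := comp j; rewrite S0 mulr0 add0r => H.
  by rewrite mulrBl [a * _]mulrC H subrr.
have mueq : mu1 = a.
  case: (pickP (fun j => w 0 j != 0)) => [j wj | H].
    move/eqP: (aw j); rewrite mulf_eq0 (negPf wj) orbF subr_eq0 => /eqP.
    by move=> ->.
  case/eqP: w0; apply/rowP => j; rewrite mxE; apply/eqP; exact: negbFE (H j).
have Neq : c%:R / avg_deg R E = b + a.
  rewrite (avg_eq R V E c c1 cu M1) -(lap_tr R V E noiso) Leq /mxtrace.
  rewrite (eq_bigr (fun=> b + a)); last by move=> i _; rewrite mxE eqxx mul1r.
  rewrite sumr_const card_ord -[(b + a) *+ _]mulr_natr mulfK //.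
  by rewrite gt_eqF // ltr0n.
split => //.
rewrite Neq mueq; case: eqP => [e|_].
  by exfalso; move: e b0; clear; lra.
have p1 : (1 <= p)%N by lia.
rewrite (chi_flower V E c p k h k1 hk Ep p1 Hc).
rewrite /a /b; field.
apply/andP; split; first by rewrite gt_eqF.
have -> : k%:R + (c%:R - k%:R) * p%:R + - (c%:R - k%:R) * p%:R = k%:R :> R by ring.
by rewrite gt_eqF.
Qed.

Theorem mainTheorem15 (R : realType) :
  (forall (V : finType) (E : {set {set V}}) (c : nat) (mu1 : R),
     (1 <= c)%N -> c_uniform E c -> (1 <= #|E|)%N -> no_isolated E ->
     eigenvalue (edge_laplacian R E) mu1 ->
     (forall a : R, eigenvalue (edge_laplacian R E) a -> mu1 <= a) ->
     mu1 <= c%:R / avg_deg R E /\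
     (if mu1 == c%:R / avg_deg R E then (1 <= chi_edge E)%N
      else (c%:R - mu1) / (c%:R / avg_deg R E - mu1) <= (chi_edge E)%:R))
  /\
  (forall (V : finType) (E : {set {set V}}) (c p k : nat) (mu1 : R),
     (2 <= p)%N -> (1 <= k)%N -> (k <= c - 1)%N ->
     is_hyperflower E c p k ->
     eigenvalue (edge_laplacian R E) mu1 ->
     (forall a : R, eigenvalue (edge_laplacian R E) a -> mu1 <= a) ->
     mu1 <= c%:R / avg_deg R E /\
     (if mu1 == c%:R / avg_deg R E then chi_edge E = 1%N
      else (chi_edge E)%:R = (c%:R - mu1) / (c%:R / avg_deg R E - mu1))).
Proof.
split.
- exact: part1.
- exact: part2.
Qed.
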